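(* Let $d_1,d_2,d_3,r_1,r_2$ be positive integers with $r_1<d_1d_2$ and $r_2\le d_2d_3$. Let $\mathrm{GQSAT}_3$ denote $\mathrm{GQSAT}$ of the following instance: - three qudits of dimensions $d_1,d_2,d_3$; - two hyperedges $\{1,2\}$ and $\{2,3\}$ with ranks $r_1$ and $r_2$. Let $(G_3,c)$ be the following tensor network template: - two inputs $s_1,s_2$ and two outputs $t_1,t_2$; - two vertices $x,y$; - edges with capacities: - $s_1$–$x$, capacity $d_1d_2-r_1$; - $x$–$t_1$, capacity $d_1$; - $x$–$y$, capacity $d_2$; - $s_2$–$y$, capacity $d_3$; - $y$–$t_2$, capacity $r_2$. Then $\mathrm{GQSAT}_3=d_3(d_1d_2-r_1)-\mathrm{QMF}(G_3,c)$.
   Context: A tensor network template $(G,c)$ consists of a finite undirected graph $G$ with edge set $E$ whose vertex set is partitioned as $S\sqcup T\sqcup V$. Every element of $S$ (inputs) and every element of $T$ (outputs) is an open end of degree $1$; the elements of $V$ are called vertices. For $u\in S\sqcup T$, $e(u)$ denotes the edge incident to $u$. A capacity function $c:E\to\mathbb{Z}_{>0}$ is given, and to each edge $e$ one associates $\mathbb{C}^{c_e}$ with a fixed basis. At each vertex $v$ of degree $d_v$ an ordering $e(v,1),\dots,e(v,d_v)$ of the incident edge-ends is fixed. A tensor assignment $\mathcal T=(\mathcal T_v)_{v\in V}$ chooses $\mathcal T_v\in\bigotimes_{i=1}^{d_v}\mathbb{C}^{c_{e(v,i)}}$ for each $v$. Let $V_S=\bigotimes_{u\in S}\mathbb{C}^{c_{e(u)}}$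 and $V_T=\bigotimes_{u\in T}\mathbb{C}^{c_{e(u)}}$. Contracting the network along all edges gives $\beta(G,c;\mathcal T)\in\mathrm{Hom}(V_S,V_T)$, whose matrix entries are $\langle I_T|\beta|I_S\rangle=\sum_W\prod_{v\in V}(\mathcal T_v)_{W|_v}$. Here $W$ ranges over all assignments of basis indices to all edges that agree with $I_S$ on the input edges and with $I_T$ on the output edges, and $W|_v$ is the tuple of indices on $e(v,1),\dots,e(v,d_v)$. The quantum max-flow is $\mathrm{QMF}(G,c)=\max_{\mathcal T}\operatorname{rank}\beta(G,c;\mathcal T)$. $\mathrm{GQSAT}$: an instance consists of $n$ qudits with dimensions $d_1,\dots,d_n$, a set of hyperedges $e\subseteq\{1,\dots,n\}$, and a rank $r_e$ for each hyperedge. For orthogonal projectors $\Pi_e$ of rank $r_e$ on $\bigotimes_{v\in e}\mathbb{C}^{d_v}$, set $H=\sum_e\Pi_e\otimes I_{\{1,\dots,n\}\setminus e}$ acting on $\bigotimes_{v=1}^n\mathbb{C}^{d_v}$. Then $\mathrm{GQSAT}$ of the instance is the minimum of $\dim\ker H$ over all such choices of projectors. This minimum equals the value of $\dim\ker H$ for a generic choice of projectors. *)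

(* Defs.v *)
From HB Require Import structures.
From mathcomp Require Import all_boot all_order all_algebra.
Set Implicit Arguments. Unset Strict Implicit. Unset Printing Implicit Defensive.
Import Order.TTheory GRing.Theory Num.Theory.
Local Open Scope ring_scope.

(* Decoding of a tensor-product basis index k of C^m (x) C^n into (i, j),
   lexicographic order (k = i * n + j), the inverse of mxvec_index. *)
Definition unpair (m n : nat) (k : 'I_(m * n)) : 'I_m * 'I_n :=
  enum_val (cast_ord (esym (mxvec_cast m n)) k).

Definition kron (C : nzRingType) (m1 n1 m2 n2 : nat)
  (A : 'M[C]_(m1, n1)) (B : 'M[C]_(m2, n2)) : 'M[C]_(m1 * m2, n1 * n2) :=
  \matrix_(i, j) (A (unpair i).1 (unpair j).1 * B (unpair i).2 (unpair j).2).

Definition adjmx (C : numClosedFieldType) (m n : nat) (A : 'M[C]_(m, n)) :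
  'M[C]_(n, m) := (map_mx Num.conj A)^T.

Definition orth_projector (C : numClosedFieldType) (n : nat) (P : 'M[C]_n)
  (r : nat) : Prop :=
  P *m P = P /\ adjmx P = P /\ \rank P = r.

Definition is_min (P : nat -> Prop) (n : nat) : Prop :=
  P n /\ forall m, P m -> (n <= m)%N.
Definition is_max (P : nat -> Prop) (n : nat) : Prop :=
  P n /\ forall m, P m -> (m <= n)%N.

(* GQSAT instance: qudits of dims d1,d2,d3; hyperedges {1,2} (rank r1) and
   {2,3} (rank r2).  H = Pi1 (x) I_3 + I_1 (x) Pi2 on C^(d1*d2*d3). *)
Definition H3 (C : numClosedFieldType) (d1 d2 d3 : nat)
  (P1 : 'M[C]_(d1 * d2)) (P2 : 'M[C]_(d2 * d3)) : 'M[C]_(d1 * d2 * d3) :=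
  kron P1 (1%:M : 'M[C]_d3)
  + castmx (mulnA d1 d2 d3, mulnA d1 d2 d3) (kron (1%:M : 'M[C]_d1) P2).

Definition GQSAT3_values (C : numClosedFieldType) (d1 d2 d3 r1 r2 : nat)
  (k : nat) : Prop :=
  exists (P1 : 'M[C]_(d1 * d2)) (P2 : 'M[C]_(d2 * d3)),
    orth_projector P1 r1 /\ orth_projector P2 r2 /\
    \rank (kermx (H3 P1 P2)) = k.

(* Tensor network template G3: inputs s1, s2; outputs t1, t2; vertices x, y.
   Edges: e1 = s1-x (cap d1*d2-r1), e2 = x-t1 (cap d1), e3 = x-y (cap d2),
   e4 = s2-y (cap d3), e5 = y-t2 (cap r2).
   Edge-end orderings: at x (e1,e2,e3), at y (e3,e4,e5).
   V_S = C^(d1*d2-r1) (x) C^d3 (order s1,s2), V_T = C^d1 (x) C^r2 (order t1,t2).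
   <I_T | beta | I_S> = sum over the index on e3 of Tx(..) * Ty(..). *)
Definition beta3 (C : numClosedFieldType) (d1 d2 d3 r1 r2 : nat)
  (Tx : 'I_(d1 * d2 - r1) -> 'I_d1 -> 'I_d2 -> C)
  (Ty : 'I_d2 -> 'I_d3 -> 'I_r2 -> C) : 'M[C]_(d1 * r2, (d1 * d2 - r1) * d3) :=
  \matrix_(I, J) \sum_(k < d2)
     (Tx (unpair J).1 (unpair I).1 k * Ty k (unpair J).2 (unpair I).2).

Definition QMF3_values (C : numClosedFieldType) (d1 d2 d3 r1 r2 : nat)
  (k : nat) : Prop :=
  exists (Tx : 'I_(d1 * d2 - r1) -> 'I_d1 -> 'I_d2 -> C)
         (Ty : 'I_d2 -> 'I_d3 -> 'I_r2 -> C),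
    \rank (beta3 Tx Ty) = k.

(* Main.v *)
Require Import Defs.
From HB Require Import structures.
From mathcomp Require Import all_boot all_order all_algebra.
From mathcomp Require Import zify ring.
From Stdlib Require Import Classical.
Import Order.TTheory GRing.Theory Num.Theory.

Module Helpers.
Set Implicit Arguments. Unset Strict Implicit. Unset Printing Implicit Defensive.
Local Open Scope ring_scope.

Lemma enum_prodE (m n : nat) : enum {: 'I_m * 'I_n} = prod_enum 'I_m 'I_n.
Proof. by rewrite enumT unlock. Qed.

Lemma index_allpairs (T1 T2 : eqType) (s1 : seq T1) (s2 : seq T2) x y :
  x \in s1 -> y \in s2 ->
  index (x, y) [seq (x1, x2) | x1 <- s1, x2 <- s2] = (index x s1 * size s2 + index y s2)%N.
Proof.
move=> xs ys; elim: s1 xs => //= a s IH.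
rewrite inE index_cat; case: (eqVneq a x) => [->|ne] /= xs.
  by rewrite mem_map ?ys ?index_map //; move=> u v [].
have -> : (x, y) \in [seq (a, x2) | x2 <- s2] = false.
  by apply/negbTE/mapP => -[z _ [e _]]; rewrite e eqxx in ne.
rewrite IH // size_map; lia.
Qed.

Lemma val_enum_rank (T : finType) (x : T) : val (enum_rank x) = index x (enum T).
Proof.
rewrite -{2}(nth_enum_rank x x) index_uniq ?enum_uniq // -cardE; exact: ltn_ord.
Qed.

Lemma val_mxvec_index m n (i : 'I_m) (j : 'I_n) :
  val (mxvec_index i j) = (i * n + j)%N.
Proof.
rewrite /mxvec_index /= val_enum_rank enum_prodE /prod_enum.
by rewrite index_allpairs ?mem_enum // !index_enum_ord size_enum_ord.
Qed.


Lemma unpairK m n (i : 'I_m) (j : 'I_n) : unpair (mxvec_index i j) = (i, j).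
Proof. by rewrite /unpair /mxvec_index cast_ordK enum_rankK. Qed.

Lemma mxvec_index_inj m n (i i' : 'I_m) (j j' : 'I_n) :
  (mxvec_index i j == mxvec_index i' j') = (i == i') && (j == j').
Proof.
apply/eqP/andP => [e|[/eqP -> /eqP ->] //].
by have := congr1 (@unpair m n) e; rewrite !unpairK => -[-> ->].
Qed.

Lemma sum_pair (R : nmodType) m n (F : 'I_(m * n) -> R) :
  \sum_(k < (m * n)%N) F k = \sum_(i < m) \sum_(j < n) F (mxvec_index i j).
Proof.
rewrite pair_big /= (reindex (fun p : 'I_m * 'I_n => mxvec_index p.1 p.2)) //=.
exists (@unpair m n) => [[i j] _|k _]; first by rewrite unpairK.
by case/mxvec_indexP: k => i j; rewrite unpairK.
Qed.

Section Kron.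
Variable R : comNzRingType.

Lemma kronE m1 n1 m2 n2 (A : 'M[R]_(m1, n1)) (B : 'M[R]_(m2, n2)) i1 i2 j1 j2 :
  kron A B (mxvec_index i1 i2) (mxvec_index j1 j2) = A i1 j1 * B i2 j2.
Proof. by rewrite mxE !unpairK. Qed.

Lemma sum_delta n (y : 'I_n) (F : 'I_n -> R) :
  \sum_(x < n) ((y == x)%:R * F x) = F y.
Proof.
rewrite (bigD1 y) //= eqxx mul1r big1 ?addr0 // => x /negbTE.
by rewrite eq_sym => ->; rewrite mul0r.
Qed.

Lemma kron_mul m1 n1 p1 m2 n2 p2 (A : 'M[R]_(m1, n1)) (B : 'M[R]_(m2, n2))
   (C : 'M[R]_(n1, p1)) (D : 'M[R]_(n2, p2)) :
  kron A B *m kron C D = kron (A *m C) (B *m D).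
Proof.
apply/matrixP => I J; case/mxvec_indexP: I => i1 i2; case/mxvec_indexP: J => j1 j2.
rewrite kronE !mxE sum_pair mulr_suml; apply: eq_bigr => k _.
rewrite mulr_sumr; apply: eq_bigr => l _; rewrite !kronE; ring.
Qed.

Lemma kron1 m n : kron (1%:M : 'M[R]_m) (1%:M : 'M[R]_n) = 1%:M.
Proof.
apply/matrixP => I J; case/mxvec_indexP: I => i1 i2; case/mxvec_indexP: J => j1 j2.
rewrite kronE !mxE mxvec_index_inj.
by case: (i1 == j1); case: (i2 == j2); rewrite ?mulr1 ?mulr0 ?mul0r.
Qed.

Lemma kronBl m1 n1 m2 n2 (A A' : 'M[R]_(m1, n1)) (B : 'M[R]_(m2, n2)) :
  kron (A - A') B = kron A B - kron A' B.
Proof. by apply/matrixP => I J; rewrite !mxE mulrBl. Qed.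

Lemma kron0l m1 n1 m2 n2 (B : 'M[R]_(m2, n2)) : kron (0 : 'M[R]_(m1, n1)) B = 0.
Proof. by apply/matrixP => I J; rewrite !mxE mul0r. Qed.

End Kron.

Lemma adjmx_kron (C : numClosedFieldType) m1 n1 m2 n2 (A : 'M[C]_(m1, n1)) (B : 'M[C]_(m2, n2)) :
  adjmx (kron A B) = kron (adjmx A) (adjmx B).
Proof. by apply/matrixP => I J; rewrite !mxE rmorphM. Qed.

Lemma castmx_mul (R : pzRingType) m m' n n' p p' (e1 : m = m') (e2 : n = n') (e3 : p = p')
  (A : 'M[R]_(m, n)) (B : 'M[R]_(n, p)) :
  castmx (e1, e3) (A *m B) = castmx (e1, e2) A *m castmx (e2, e3) B.
Proof. by case: m' / e1; case: n' / e2; case: p' / e3; rewrite !castmx_id. Qed.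

Lemma adjmx_cast (C : numClosedFieldType) m m' n n' (e1 : m = m') (e2 : n = n') (A : 'M[C]_(m, n)) :
  adjmx (castmx (e1, e2) A) = castmx (e2, e1) (adjmx A).
Proof. by case: m' / e1; case: n' / e2; rewrite !castmx_id. Qed.

Lemma cast_assoc d1 d2 d3 (i : 'I_d1) (k : 'I_d2) (j : 'I_d3) :
  cast_ord (esym (mulnA d1 d2 d3)) (mxvec_index (mxvec_index i k) j)
  = mxvec_index i (mxvec_index k j).
Proof. apply: val_inj; rewrite /=. have h := @val_mxvec_index; rewrite /= in h; rewrite !h. have h2 : forall m n (i : 'I_m) (j : 'I_n), nat_of_ord (mxvec_index i j) = (i * n + j)%N by move=> *; apply: val_mxvec_index. rewrite !h2; lia. Qed.


Section Beta.
Variable C : numClosedFieldType.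
Variables d1 d2 d3 r1 r2 : nat.
Local Notation a := (d1 * d2 - r1)%N.

Definition A_of (Tx : 'I_a -> 'I_d1 -> 'I_d2 -> C) : 'M[C]_(a, d1 * d2) :=
  \matrix_(s, p) Tx s (unpair p).1 (unpair p).2.
Definition B_of (Ty : 'I_d2 -> 'I_d3 -> 'I_r2 -> C) : 'M[C]_(d2 * d3, r2) :=
  \matrix_(p, t) Ty (unpair p).1 (unpair p).2 t.
Definition Tx_of (A : 'M[C]_(a, d1 * d2)) : 'I_a -> 'I_d1 -> 'I_d2 -> C :=
  fun s i k => A s (mxvec_index i k).
Definition Ty_of (B : 'M[C]_(d2 * d3, r2)) : 'I_d2 -> 'I_d3 -> 'I_r2 -> C :=
  fun k j t => B (mxvec_index k j) t.

Lemma A_ofK A : A_of (Tx_of A) = A.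
Proof. by apply/matrixP => s p; case/mxvec_indexP: p => i k; rewrite mxE unpairK. Qed.
Lemma B_ofK B : B_of (Ty_of B) = B.
Proof. by apply/matrixP => p t; case/mxvec_indexP: p => i k; rewrite mxE unpairK. Qed.

Definition Ymx m (B : 'M[C]_(d2 * d3, m)) : 'M[C]_(d1 * d2 * d3, d1 * m) :=
  castmx (mulnA d1 d2 d3, erefl) (kron (1%:M : 'M[C]_d1) B).

Lemma beta3E Tx Ty :
  beta3 Tx Ty = (kron (A_of Tx) (1%:M : 'M[C]_d3) *m Ymx (B_of Ty))^T.
Proof.
apply/matrixP => I J; case/mxvec_indexP: I => i t; case/mxvec_indexP: J => s j.
rewrite !mxE !unpairK /= (@sum_pair _ (d1 * d2) d3).
rewrite (@sum_pair _ d1 d2).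
rewrite [RHS](bigD1 i) //= [X in _ + X]big1 ?addr0; last first.
  move=> i' ne; have {}ne := negbTE ne; apply: big1 => k _; apply: big1 => j' _.
  by rewrite castmxE /= cast_assoc cast_ord_id kronE !mxE !unpairK /= ne mul0r mulr0.
apply: eq_bigr => k _.
rewrite [RHS](bigD1 j) //= [X in _ + X]big1 ?addr0; last first.
  by move=> j' ne; have {}ne := negbTE ne; rewrite castmxE /= cast_assoc cast_ord_id !mxE !unpairK /= eq_sym ne /= mulr0 mul0r.
rewrite /Ymx castmxE /= cast_assoc cast_ord_id !mxE !unpairK /= !eqxx /=; ring.
Qed.

End Beta.


Section Adj.
Variable C : numClosedFieldType.

Lemma adjmxE m n (A : 'M[C]_(m, n)) i j : adjmx A i j = (A j i)^*.
Proof. by rewrite !mxE. Qed.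

Lemma adjmx_mul m n p (A : 'M[C]_(m, n)) (B : 'M[C]_(n, p)) :
  adjmx (A *m B) = adjmx B *m adjmx A.
Proof.
apply/matrixP => i j; rewrite !mxE rmorph_sum; apply: eq_bigr => k _.
by rewrite !mxE rmorphM mulrC.
Qed.

Lemma adjmxK m n (A : 'M[C]_(m, n)) : adjmx (adjmx A) = A.
Proof. by apply/matrixP => i j; rewrite !mxE conjCK. Qed.

Lemma adjmx1 n : adjmx (1%:M : 'M[C]_n) = 1%:M.
Proof. by apply/matrixP => i j; rewrite !mxE rmorphMn rmorph1 eq_sym. Qed.

Lemma adjmxB m n (A B : 'M[C]_(m, n)) : adjmx (A - B) = adjmx A - adjmx B.
Proof. by apply/matrixP => i j; rewrite !mxE rmorphB. Qed.

Lemma adjmxD m n (A B : 'M[C]_(m, n)) : adjmx (A + B) = adjmx A + adjmx B.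
Proof. by apply/matrixP => i j; rewrite !mxE rmorphD. Qed.

Lemma adjmx_tr m n (A : 'M[C]_(m, n)) : adjmx (A^T) = (adjmx A)^T.
Proof. by apply/matrixP => i j; rewrite !mxE. Qed.

Lemma adjmx_inv n (A : 'M[C]_n) : adjmx (invmx A) = invmx (adjmx A).
Proof. by rewrite /adjmx map_invmx trmx_inv. Qed.

Lemma psd_sum m n n' (M : 'M[C]_(m, n)) (N : 'M[C]_(m, n')) :
  M *m adjmx M + N *m adjmx N = 0 -> M = 0.
Proof.
move=> H; apply/matrixP => i j; have := congr1 (fun X : 'M[C]_m => X i i) H.
rewrite !mxE => /eqP; rewrite paddr_eq0; first last.
- by apply: sumr_ge0 => k _; rewrite !mxE mul_conjC_ge0.
- by apply: sumr_ge0 => k _; rewrite !mxE mul_conjC_ge0.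
case/andP => /eqP h _.
have H2 := psumr_eq0P _ h.
have /eqP := H2 (fun k _ => ltac:(by rewrite adjmxE mul_conjC_ge0)) j isT.
by rewrite adjmxE mul_conjC_eq0 => /eqP.
Qed.


Definition sa_idem n (Q : 'M[C]_n) := Q *m Q = Q /\ adjmx Q = Q.

Lemma quad_form p n (K : 'M[C]_(p, n)) Q : sa_idem Q ->
  K *m Q *m adjmx (K *m Q) = K *m Q *m adjmx K.
Proof. by case=> QQ aQ; rewrite adjmx_mul aQ mulmxA -(mulmxA K) QQ. Qed.

Lemma ker_sum n (Q1 Q2 : 'M[C]_n) : sa_idem Q1 -> sa_idem Q2 ->
  (kermx (Q1 + Q2) :=: kermx Q1 :&: kermx Q2)%MS.
Proof.
move=> h1 h2; apply/eqmxP/andP; split; last first.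
  apply/sub_kermxP; rewrite mulmxDr.
  have /sub_kermxP -> := capmxSl (kermx Q1) (kermx Q2).
  by have /sub_kermxP -> := capmxSr (kermx Q1) (kermx Q2); rewrite addr0.
set K := kermx (Q1 + Q2).
have HK : K *m Q1 *m adjmx (K *m Q1) + K *m Q2 *m adjmx (K *m Q2) = 0.
  by rewrite !quad_form // -mulmxDl -mulmxDr mulmx_ker mul0mx.
rewrite sub_capmx; apply/andP; split; apply/sub_kermxP.
  exact: psd_sum HK.
by apply: psd_sum; rewrite addrC; exact: HK.
Qed.

Lemma ident n p q (Q1 Q2 : 'M[C]_n) (X : 'M[C]_(p, n)) (Y : 'M[C]_(n, q)) :
  sa_idem Q1 -> sa_idem Q2 -> (X :=: kermx Q1)%MS -> row_free X ->
  (kermx Y :=: kermx Q2)%MS ->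
  (\rank (X *m Y) + \rank (kermx (Q1 + Q2)))%N = p.
Proof.
move=> h1 h2 eX fX eY.
rewrite (eqmx_rank (introT eqmxP (ker_sum h1 h2))) -(eqmx_rank (introT eqmxP (cap_eqmx eX eY))).
by rewrite mxrank_mul_ker; apply/eqP.
Qed.

End Adj.


Section KronLA.
Variable C : numClosedFieldType.
Variables d1 d2 d3 : nat.

Definition Q1of (P1 : 'M[C]_(d1 * d2)) : 'M[C]_(d1 * d2 * d3) := kron P1 (1%:M : 'M[C]_d3).
Definition Q2of (P2 : 'M[C]_(d2 * d3)) : 'M[C]_(d1 * d2 * d3) :=
  castmx (mulnA d1 d2 d3, mulnA d1 d2 d3) (kron (1%:M : 'M[C]_d1) P2).

Lemma H3E P1 P2 : H3 P1 P2 = Q1of P1 + Q2of P2.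
Proof. by []. Qed.

Lemma sa_Q1 P1 : sa_idem P1 -> sa_idem (Q1of P1).
Proof.
case=> h1 h2; split; rewrite /Q1of; first by rewrite kron_mul h1 mulmx1.
by rewrite adjmx_kron h2 adjmx1.
Qed.

Lemma sa_Q2 P2 : sa_idem P2 -> sa_idem (Q2of P2).
Proof.
case=> h1 h2; split; rewrite /Q2of; first by rewrite -castmx_mul kron_mul h1 mulmx1.
by rewrite adjmx_cast adjmx_kron h2 adjmx1.
Qed.

Lemma kerQ1 p (A : 'M[C]_(p, d1 * d2)) P1 :
  row_free A -> A *m P1 = 0 -> (1%:M - P1 <= A)%MS ->
  (kron A (1%:M : 'M[C]_d3) :=: kermx (Q1of P1))%MS /\ row_free (kron A (1%:M : 'M[C]_d3)).
Proof.
move=> fA AP /submxP [Z eZ]; split; last first.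
  case/row_freeP: fA => R AR; apply/row_freeP; exists (kron R 1%:M).
  by rewrite kron_mul AR mulmx1 kron1.
apply/eqmxP/andP; split.
  by apply/sub_kermxP; rewrite /Q1of kron_mul AP kron0l.
set K := kermx _.
have -> : K = K *m (1%:M - Q1of P1) by rewrite mulmxBr mulmx_ker mulmx1 subr0.
rewrite /Q1of -(kron1 C (d1 * d2) d3) -kronBl eZ -[1%:M : 'M_d3](mulmx1 1%:M) -kron_mul mulmxA.
by rewrite mulmx1; exact: submxMl.
Qed.

Lemma kermx_mulr m n p (A : 'M[C]_(m, n)) (B : 'M[C]_(n, p)) :
  (kermx A <= kermx (A *m B))%MS.
Proof. by apply/sub_kermxP; rewrite mulmxA mulmx_ker mul0mx. Qed.

Lemma kerQ2 q (B : 'M[C]_(d2 * d3, q)) P2 W Z :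
  P2 = B *m W -> B = P2 *m Z -> (kermx (Ymx d1 B) :=: kermx (Q2of P2))%MS.
Proof.
move=> eP eB; apply/eqmxP/andP; split.
  rewrite /Q2of eP -[1%:M : 'M_d1](mulmx1 1%:M) -kron_mul (castmx_mul _ erefl).
  exact: kermx_mulr.
rewrite /Ymx eB -[1%:M : 'M_d1](mulmx1 1%:M) -kron_mul (castmx_mul _ (mulnA d1 d2 d3)).
exact: kermx_mulr.
Qed.

Lemma rank_mono p p' q q' (A : 'M[C]_(p, d1 * d2)) (A' : 'M[C]_(p', d1 * d2))
  (B : 'M[C]_(d2 * d3, q)) (B' : 'M[C]_(d2 * d3, q')) :
  (A <= A')%MS -> forall Z, B = B' *m Z ->
  (\rank (kron A (1%:M : 'M[C]_d3) *m Ymx d1 B) <= \rank (kron A' (1%:M : 'M[C]_d3) *m Ymx d1 B'))%N.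
Proof.
move=> /submxP [X ->] Z ->.
rewrite /Ymx -[1%:M : 'M_d3](mulmx1 1%:M) -kron_mul -[1%:M : 'M_d1](mulmx1 1%:M) -kron_mul.
rewrite (castmx_mul _ erefl) castmx_id !mulmx1 -mulmxA mulmxA.
rewrite mulmxA -(mulmxA (kron X 1%:M)).
apply: leq_trans (mxrankM_maxl _ _) _; exact: mxrankM_maxr.
Qed.

End KronLA.


Section Constr.
Variable C : numClosedFieldType.

Lemma base_rows m n r (X : 'M[C]_(m, n)) : \rank X = r ->
  exists A : 'M[C]_(r, n), (A :=: X)%MS /\ row_free A.
Proof.
move=> hr; exists (castmx (hr, erefl) (row_base X)).
have e : (castmx (hr, erefl) (row_base X) :=: X)%MS.
  exact: eqmx_trans (eqmx_cast _ _) (eq_row_base X).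
by split => //; rewrite /row_free e hr.
Qed.

Lemma base_cols m n r (X : 'M[C]_(m, n)) : \rank X = r ->
  exists (B : 'M[C]_(m, r)) (W : 'M[C]_(r, n)) (Z : 'M[C]_(n, r)), X = B *m W /\ B = X *m Z.
Proof.
move=> hr; have [A [eA _]] := @base_rows n m r (trmx X) ltac:(by rewrite mxrank_tr).
have /submxP [W' eW] : (X^T <= A)%MS by rewrite eA.
have /submxP [Z' eZ] : (A <= X^T)%MS by rewrite eA.
exists A^T, W'^T, Z'^T; split.
  by rewrite -[X]trmxK eW trmx_mul.
by rewrite eZ trmx_mul trmxK.
Qed.

Lemma proj_compl n k (P : 'M[C]_n) : orth_projector P k -> orth_projector (1%:M - P) (n - k).
Proof.
case=> PP [aP rP]; split; [|split].
- by rewrite mulmxBl !mulmxBr !mul1mx PP mulmx1 subrr subr0.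
- by rewrite adjmxB adjmx1 aP.
have e : (1%:M - P :=: kermx P)%MS.
  apply/eqmxP/andP; split.
    by apply/sub_kermxP; rewrite mulmxBl mul1mx PP subrr.
  have -> : kermx P = kermx P *m (1%:M - P) by rewrite mulmxBr mulmx_ker mulmx1 subr0.
  exact: submxMl.
by rewrite e mxrank_ker rP.
Qed.

Lemma proj_tr n k (P : 'M[C]_n) : orth_projector P k -> orth_projector P^T k.
Proof.
case=> PP [aP rP]; split; [|split].
- by rewrite -trmx_mul PP.
- by rewrite adjmx_tr aP.
by rewrite mxrank_tr.
Qed.

Lemma proj_sa n k (P : 'M[C]_n) : orth_projector P k -> sa_idem P.
Proof. by case=> ? []. Qed.

Lemma gram_unit k n (U : 'M[C]_(k, n)) : row_free U -> U *m adjmx U \in unitmx.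
Proof.
move=> fU; rewrite -row_free_unit -kermx_eq0; apply/eqP.
set K := kermx _.
have : K *m U *m adjmx (K *m U) + (0 : 'M[C]_(k, n)) *m adjmx (0 : 'M[C]_(k, n)) = 0.
  by rewrite mul0mx addr0 adjmx_mul mulmxA -(mulmxA K) mulmx_ker mul0mx.
by move/psd_sum => /eqP; rewrite mulmx_free_eq0 // => /eqP.
Qed.

Lemma proj_exists m n k (M : 'M[C]_(m, n)) : (\rank M <= k)%N -> (k <= n)%N ->
  exists P : 'M[C]_n, orth_projector P k /\ (M <= P)%MS.
Proof.
move=> hMk hkn.
set U : 'M[C]_(k, n) := pid_mx k *m row_ebase M.
have rU : \rank U = k.
  rewrite /U mxrankMfree ?rank_pid_mx //; by rewrite row_free_unit row_ebase_unit.
have fU : row_free U by rewrite /row_free rU.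
have MU : (M <= U)%MS.
  apply/submxP; exists (col_ebase M *m pid_mx (\rank M)).
  rewrite /U mulmxA -(mulmxA (col_ebase M)) mul_pid_mx.
  rewrite (minn_idPl hMk) (minn_idPr hMk).
  by rewrite mulmx_ebase.
clearbody U.
set G := U *m adjmx U.
have uG : G \in unitmx by exact: gram_unit.
set P := adjmx U *m invmx G *m U.
have UP : U *m P = U by rewrite /P !mulmxA -/G mulmxV // mul1mx.
have eP : (P :=: U)%MS.
  apply/eqmxP/andP; split; first exact: submxMl.
  by rewrite -{1}UP submxMl.
exists P; split; last by rewrite eP.
split; [|split].
- by rewrite {1}/P -(mulmxA (adjmx U *m invmx G)) UP.
- by rewrite /P !adjmx_mul adjmxK adjmx_inv /G adjmx_mul adjmxK mulmxA.
by rewrite eP.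
Qed.

End Constr.


Lemma exists_min (P : nat -> Prop) n0 : P n0 -> exists n, is_min P n.
Proof.
elim: n0 {-2}n0 (leqnn n0) => [|N IH] n hn Pn.
  by exists n; split=> // m _; rewrite leqn0 in hn; rewrite (eqP hn).
case: (classic (exists m, (m < n)%N /\ P m)) => [[m [hm Pm]]|no].
  by apply: (IH m) => //; lia.
exists n; split => // m Pm; rewrite leqNgt; apply/negP => hm; apply: no; by exists m.
Qed.

Lemma exists_max (P : nat -> Prop) B n0 : P n0 -> (forall n, P n -> (n <= B)%N) ->
  exists n, is_max P n.
Proof.
move=> P0 hB.
have [k [[n [Pn ek]] hk]] := @exists_min (fun k => exists n, P n /\ k = (B - n)%N) (B - n0)%N
  (ex_intro _ n0 (conj P0 erefl)).
exists n; split => // m Pm.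
have := hk (B - m)%N (ex_intro _ m (conj Pm erefl)).
have := hB _ Pm; have := hB _ Pn; lia.
Qed.

Section Main.
Variable C : numClosedFieldType.
Variables d1 d2 d3 r1 r2 : nat.
Hypothesis hr1 : (r1 < d1 * d2)%N.
Hypothesis hr2 : (r2 <= d2 * d3)%N.
Local Notation a := (d1 * d2 - r1)%N.

Lemma coreA (P1 : 'M[C]_(d1 * d2)) (P2 : 'M[C]_(d2 * d3)) :
  orth_projector P1 r1 -> orth_projector P2 r2 ->
  exists (A : 'M[C]_(a, d1 * d2)) (B : 'M[C]_(d2 * d3, r2)),
    (kermx P1 <= A)%MS /\ (exists W, P2 = B *m W) /\
    (\rank (kron A (1%:M : 'M[C]_d3) *m Ymx d1 B) + \rank (kermx (H3 P1 P2)) = a * d3)%N.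
Proof.
move=> h1 h2.
have rk : \rank (kermx P1) = a by rewrite mxrank_ker; case: h1 => _ [_ ->].
have [A [eA fA]] := base_rows rk.
have rk2 : \rank P2 = r2 by case: h2 => _ [_ ->].
have [B [W [Z [eW eZ]]]] := base_cols rk2.
exists A, B; split; first by rewrite eA.
split; first by exists W.
have AP : A *m P1 = 0 by apply/sub_kermxP; rewrite eA.
have sub1 : (1%:M - P1 <= A)%MS.
  by rewrite eA; apply/sub_kermxP; case: h1 => PP _; rewrite mulmxBl mul1mx PP subrr.
have [eX fX] := kerQ1 d3 fA AP sub1.
have eY := kerQ2 d1 eW eZ.
rewrite H3E; apply: ident => //.
- exact: sa_Q1 (proj_sa h1).
- exact: sa_Q2 (proj_sa h2).
Qed.

Lemma stepA (P1 : 'M[C]_(d1 * d2)) (P2 : 'M[C]_(d2 * d3)) :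
  orth_projector P1 r1 -> orth_projector P2 r2 ->
  exists (Tx : 'I_a -> 'I_d1 -> 'I_d2 -> C) (Ty : 'I_d2 -> 'I_d3 -> 'I_r2 -> C), (\rank (beta3 Tx Ty) + \rank (kermx (H3 P1 P2)) = a * d3)%N.
Proof.
move=> h1 h2; have [A [B [_ [_ E]]]] := coreA h1 h2.
exists (Tx_of A), (Ty_of B); by rewrite beta3E mxrank_tr A_ofK B_ofK.
Qed.

Lemma stepB (Tx : 'I_a -> 'I_d1 -> 'I_d2 -> C) (Ty : 'I_d2 -> 'I_d3 -> 'I_r2 -> C) : exists (P1 : 'M[C]_(d1 * d2)) (P2 : 'M[C]_(d2 * d3)),
  orth_projector P1 r1 /\ orth_projector P2 r2 /\
  (\rank (beta3 Tx Ty) + \rank (kermx (H3 P1 P2)) <= a * d3)%N.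
Proof.
set A := A_of Tx; set B := B_of Ty.
have [P' [hP' AP']] := @proj_exists C _ _ a A (rank_leq_row A) (leq_subr _ _).
have h1 : orth_projector (1%:M - P') r1.
  by have := proj_compl hP'; rewrite subKn // ltnW.
have [P [hP BP]] := @proj_exists C _ _ r2 B^T (rank_leq_row _) hr2.
have h2 := proj_tr hP.
exists (1%:M - P'), P^T; split => //; split => //.
have [A' [B' [sA [[W eW] E]]]] := coreA h1 h2.
apply: (leq_trans _ (eq_leq E)); rewrite leq_add2r beta3E mxrank_tr.
case/submxP: BP; rewrite /B => D eD.
apply: (@rank_mono _ _ _ _ _ _ _ _ _ _ _ _ _ (W *m D^T)).
  apply: submx_trans sA; apply/sub_kermxP.
  case/submxP: AP'; rewrite /A => D0 ->; case: hP' => PP _.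
  by rewrite mulmxBr mulmx1 -mulmxA PP subrr.
by rewrite -[B_of Ty]trmxK eD trmx_mul eW mulmxA.
Qed.

End Main.

End Helpers.
Import Helpers.

Theorem claim6p1 (C : numClosedFieldType) (d1 d2 d3 r1 r2 : nat)
  (hd1 : (0 < d1)%N) (hd2 : (0 < d2)%N) (hd3 : (0 < d3)%N)
  (hr1pos : (0 < r1)%N) (hr2pos : (0 < r2)%N)
  (hr1 : (r1 < d1 * d2)%N) (hr2 : (r2 <= d2 * d3)%N) :
  exists g q : nat,
    is_min (GQSAT3_values C d1 d2 d3 r1 r2) g /\
    is_max (QMF3_values C d1 d2 d3 r1 r2) q /\
    (g%:Z = (d3 * (d1 * d2 - r1))%:Z - q%:Z)%R.
Proof.
pose Tx0 : 'I_(d1 * d2 - r1) -> 'I_d1 -> 'I_d2 -> C := fun _ _ _ => 0%R.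
pose Ty0 : 'I_d2 -> 'I_d3 -> 'I_r2 -> C := fun _ _ _ => 0%R.
have [P1 [P2 [h1 [h2 _]]]] := stepB hr1 hr2 Tx0 Ty0.
have [g [[P1g [P2g [h1g [h2g eg]]]] ming]] :=
  @exists_min (GQSAT3_values C d1 d2 d3 r1 r2) _ (ex_intro _ P1 (ex_intro _ P2 (conj h1 (conj h2 erefl)))).
have hB : forall q, QMF3_values C d1 d2 d3 r1 r2 q -> (q <= (d1 * d2 - r1) * d3)%N.
  move=> q [Tx [Ty <-]]; have [P1' [P2' [_ [_ le]]]] := stepB hr1 hr2 Tx Ty.
  exact: leq_trans (leq_addr _ _) le.
have [q [[Txq [Tyq eq]] maxq]] :=
  @exists_max (QMF3_values C d1 d2 d3 r1 r2) _ _ (ex_intro _ Tx0 (ex_intro _ Ty0 erefl)) hB.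
exists g, q; split; first by split => //; exists P1g, P2g.
split; first by split => //; exists Txq, Tyq.
have le1 : ((d1 * d2 - r1) * d3 <= g + q)%N.
  have [Tx [Ty E]] := stepA h1g h2g.
  have := maxq _ (ex_intro _ Tx (ex_intro _ Ty erefl)).
  rewrite eg in E; lia.
have le2 : (g + q <= (d1 * d2 - r1) * d3)%N.
  have [P1' [P2' [h1' [h2' le]]]] := stepB hr1 hr2 Txq Tyq.
  have := ming _ (ex_intro _ P1' (ex_intro _ P2' (conj h1' (conj h2' erefl)))).
  rewrite eq in le; lia.
have E : (g + q = d3 * (d1 * d2 - r1))%N by rewrite mulnC; lia.
by rewrite -E PoszD addrK.
Qed.
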